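(* Let $\{q_k:k\ge0\}$ be a non-decreasing sequence of nonnegative numbers with $q_0>0$ satisfying $\frac{q_{n-1}}{Q_n}=O(1/n)$ as $n\to\infty$. Then there is a constant $c>0$ such that for all $n\in\mathbb N_+$ and all $x\in G_m$, $$|F_n(x)|\le \frac{c}{n}\sum_{j=0}^{|n|}M_j\,|K_{M_j}(x)|.$$
   Context: Let $m=(m_0,m_1,\dots)$ be a bounded sequence of integers $m_k\ge 2$; $G_m=\prod_k Z_{m_k}$ with Haar probability measure $\mu$; $M_0=1$, $M_{k+1}=m_kM_k$, $n=\sum_j n_jM_j$ with $n_j\in Z_{m_j}$. $r_k(x)=\exp(2\pi i x_k/m_k)$, $\psi_n=\prod_k r_k^{n_k}$, $D_n=\sum_{k=0}^{n-1}\psi_k$. The Fejér kernel is $K_n=\frac1n\sum_{k=1}^nD_k$. $Q_n=\sum_{k=0}^{n-1}q_k$ and the Nörlund kernel is $F_n=\frac1{Q_n}\sum_{k=1}^nq_{n-k}D_k$. For $n\in\mathbb N_+$, $|n|$ denotes the unique integer with $M_{|n|}\le n<M_{|n|+1}$. *)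

(* Defs.v *)
From Stdlib Require Import Reals Lra Lia.
Open Scope R_scope.

Definition C : Type := (R * R)%type.
Definition C0 : C := (0, 0).
Definition C1 : C := (1, 0).
Definition Cadd (z w : C) : C := (fst z + fst w, snd z + snd w).
Definition Cmul (z w : C) : C :=
  (fst z * fst w - snd z * snd w, fst z * snd w + snd z * fst w).
Definition Cscal (r : R) (z : C) : C := (r * fst z, r * snd z).
Definition Cnorm (z : C) : R := sqrt (fst z * fst z + snd z * snd z).
Fixpoint Cpow (z : C) (n : nat) : C :=
  match n with O => C1 | S n => Cmul (Cpow z n) z end.
Fixpoint Csum (f : nat -> C) (n : nat) : C :=
  match n with O => C0 | S n => Cadd (Csum f n) (f n) end.
Fixpoint Cprod (f : nat -> C) (n : nat) : C :=
  match n with O => C1 | S n => Cmul (Cprod f n) (f n) end.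
Fixpoint Rsum (f : nat -> R) (n : nat) : R :=
  match n with O => 0 | S n => Rsum f n + f n end.

Fixpoint Mseq (m : nat -> nat) (k : nat) : nat :=
  match k with O => 1%nat | S k => (m k * Mseq m k)%nat end.

(* n_j : the j-th digit of n in the mixed radix expansion n = sum n_j M_j *)
Definition digit (m : nat -> nat) (n j : nat) : nat :=
  Nat.modulo (Nat.div n (Mseq m j)) (m j).

Definition inGm (m : nat -> nat) (x : nat -> nat) : Prop :=
  forall k, (x k < m k)%nat.

Definition rchar (m : nat -> nat) (k : nat) (x : nat -> nat) : C :=
  (cos (2 * PI * INR (x k) / INR (m k)), sin (2 * PI * INR (x k) / INR (m k))).

(* psi_n = prod_k r_k^{n_k}; digits n_k vanish for k > n (as m_k >= 2),
   so the product over k < n+1 is the full product. *)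
Definition psi (m : nat -> nat) (n : nat) (x : nat -> nat) : C :=
  Cprod (fun k => Cpow (rchar m k x) (digit m n k)) (S n).

Definition Dir (m : nat -> nat) (n : nat) (x : nat -> nat) : C :=
  Csum (fun k => psi m k x) n.

Definition Fejer (m : nat -> nat) (n : nat) (x : nat -> nat) : C :=
  Cscal (/ INR n) (Csum (fun k => Dir m (S k) x) n).

Definition Qs (q : nat -> R) (n : nat) : R := Rsum q n.

Definition Norlund (m : nat -> nat) (q : nat -> R) (n : nat) (x : nat -> nat) : C :=
  Cscal (/ Qs q n) (Csum (fun k => Cscal (q (n - S k)%nat) (Dir m (S k) x)) n).

(* Main.v *)
Require Import Defs.
From Stdlib Require Import Reals.
From Stdlib Require Import Lra Lia Arith.
From Coquelicot Require Complex.
Open Scope R_scope.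

Lemma Ceq (z w : Defs.C) : fst z = fst w -> snd z = snd w -> z = w.
Proof. destruct z, w; simpl; intros; subst; reflexivity. Qed.

Ltac csolve := repeat match goal with z : Defs.C |- _ => destruct z end;
  unfold Cadd, Cmul, Cscal, Defs.C0, Defs.C1 in *; simpl in *; apply Ceq; simpl; ring.

Lemma Cnorm_Cmod z : Cnorm z = Complex.Cmod z.
Proof. unfold Cnorm, Complex.Cmod. f_equal. ring. Qed.

Lemma Cnorm_ge0 z : 0 <= Cnorm z.
Proof. rewrite Cnorm_Cmod. apply Complex.Cmod_ge_0. Qed.

Lemma Cnorm_add z w : Cnorm (Cadd z w) <= Cnorm z + Cnorm w.
Proof. rewrite !Cnorm_Cmod. apply (Complex.Cmod_triangle z w). Qed.

Lemma Cnorm_mul z w : Cnorm (Cmul z w) = Cnorm z * Cnorm w.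
Proof. rewrite !Cnorm_Cmod. apply (Complex.Cmod_mult z w). Qed.

Lemma Cnorm_real a : Cnorm (a, 0) = Rabs a.
Proof. unfold Cnorm; simpl. replace (a*a+0*0) with (Rsqr a) by (unfold Rsqr; ring).
  apply sqrt_Rsqr_abs. Qed.

Lemma Cnorm_scal r z : Cnorm (Cscal r z) = Rabs r * Cnorm z.
Proof. replace (Cscal r z) with (Cmul (r,0) z) by csolve.
  rewrite Cnorm_mul, Cnorm_real; auto. Qed.

Lemma Cnorm_C0 : Cnorm Defs.C0 = 0.
Proof. unfold Defs.C0. rewrite Cnorm_real. apply Rabs_R0. Qed.

Lemma Cnorm_C1 : Cnorm Defs.C1 = 1.
Proof. unfold Defs.C1. rewrite Cnorm_real. apply Rabs_R1. Qed.

Lemma Cnorm_pow z n : Cnorm z = 1 -> Cnorm (Cpow z n) = 1.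
Proof. intro H; induction n; simpl. apply Cnorm_C1. rewrite Cnorm_mul, IHn, H; ring. Qed.

Lemma Cnorm_rchar m k x : Cnorm (rchar m k x) = 1.
Proof. unfold Cnorm, rchar; simpl. rewrite <- sqrt_1. f_equal.
  pose proof (sin2_cos2 (2 * PI * INR (x k) / INR (m k))). unfold Rsqr in H. lra. Qed.

Lemma Csum_ext f g n : (forall k, (k < n)%nat -> f k = g k) -> Csum f n = Csum g n.
Proof. induction n; simpl; intros; auto. rewrite IHn, H; auto; lia. Qed.

Lemma Cprod_ext f g n : (forall k, (k < n)%nat -> f k = g k) -> Cprod f n = Cprod g n.
Proof. induction n; simpl; intros; auto. rewrite IHn, H; auto; lia. Qed.

Lemma Cnorm_sum f n : Cnorm (Csum f n) <= Rsum (fun k => Cnorm (f k)) n.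
Proof. induction n; simpl. rewrite Cnorm_C0; lra.
  eapply Rle_trans. apply Cnorm_add. lra. Qed.

Lemma Mseq_pos m (hm2 : forall k, (2 <= m k)%nat) k : (1 <= Mseq m k)%nat.
Proof. induction k; simpl; auto. pose proof (hm2 k). nia. Qed.

Lemma Mseq_gt m (hm2 : forall k, (2 <= m k)%nat) k : (S k <= Mseq m k)%nat.
Proof. induction k; simpl; auto. pose proof (hm2 k). nia. Qed.

Lemma Mseq_split m k j : exists P, Mseq m (k + j) = (Mseq m k * P)%nat.
Proof. induction j. exists 1%nat. rewrite Nat.add_0_r; lia.
  destruct IHj as [P HP]. exists (m (k+j) * P)%nat.
  replace (k + S j)%nat with (S (k+j)) by lia. simpl. rewrite HP. lia. Qed.

Lemma Mseq_mono m (hm2 : forall k, (2 <= m k)%nat) k l : (k <= l)%nat -> (Mseq m k <= Mseq m l)%nat.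
Proof. intro H. destruct (Mseq_split m k (l - k)) as [P HP].
  replace (k + (l - k))%nat with l in HP by lia. rewrite HP.
  destruct P. rewrite Nat.mul_0_r in HP. pose proof (Mseq_pos m hm2 l). lia. nia. Qed.

Lemma digit_big m (hm2 : forall k, (2 <= m k)%nat) n k : (n < Mseq m k)%nat -> digit m n k = 0%nat.
Proof. intro H. unfold digit. rewrite Nat.div_small by auto. apply Nat.Div0.mod_0_l. Qed.

Lemma digit_low m (hm2 : forall k, (2 <= m k)%nat) a b k N : (k < N)%nat ->
  digit m (a * Mseq m N + b) k = digit m b k.
Proof. intro H. unfold digit.
  destruct (Mseq_split m (S k) (N - S k)) as [P HP].
  replace (S k + (N - S k))%nat with N in HP by lia. rewrite HP. simpl.
  pose proof (Mseq_pos m hm2 k). pose proof (hm2 k).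
  replace (a * (m k * Mseq m k * P) + b)%nat with (b + (a * P * m k) * Mseq m k)%nat by ring.
  rewrite Nat.div_add by lia.
  replace (b / Mseq m k + a * P * m k)%nat with (b / Mseq m k + (a * P) * m k)%nat by ring.
  apply Nat.Div0.mod_add. Qed.

Lemma digit_top m (hm2 : forall k, (2 <= m k)%nat) a b N : (a < m N)%nat -> (b < Mseq m N)%nat ->
  digit m (a * Mseq m N + b) N = a.
Proof. intros Ha Hb. unfold digit. pose proof (Mseq_pos m hm2 N).
  replace (a * Mseq m N + b)%nat with (b + a * Mseq m N)%nat by ring.
  rewrite Nat.div_add by lia. rewrite Nat.div_small by auto. simpl. apply Nat.mod_small; auto. Qed.

Lemma Cprod_stab f L0 L : (forall k, (L0 <= k)%nat -> f k = Defs.C1) -> (L0 <= L)%nat ->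
  Cprod f L = Cprod f L0.
Proof. intros H HL. induction HL; auto. simpl. rewrite H by lia. rewrite IHHL. csolve. Qed.

Definition pf m n x := fun k => Cpow (rchar m k x) (digit m n k).

Lemma psi_eq m (hm2 : forall k, (2 <= m k)%nat) n x L : (n < Mseq m L)%nat ->
  psi m n x = Cprod (pf m n x) L.
Proof. intro H. unfold psi. fold (pf m n x).
  assert (Hv : forall k, (Nat.min L (S n) <= k)%nat -> pf m n x k = Defs.C1).
  { intros k Hk. unfold pf. rewrite digit_big; auto.
    destruct (Nat.le_ge_cases L (S n)).
    - rewrite Nat.min_l in Hk by auto. pose proof (Mseq_mono m hm2 L k Hk). lia.
    - rewrite Nat.min_r in Hk by auto. pose proof (Mseq_gt m hm2 k). lia. }
  rewrite (Cprod_stab _ _ (S n) Hv) by lia. rewrite (Cprod_stab _ _ L Hv) by lia. auto. Qed.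

Lemma psi_split m (hm2 : forall k, (2 <= m k)%nat) a b N x : (a < m N)%nat -> (b < Mseq m N)%nat ->
  psi m (a * Mseq m N + b) x = Cmul (psi m b x) (Cpow (rchar m N x) a).
Proof. intros Ha Hb.
  rewrite (psi_eq m hm2 _ x (S N)). 2:{ simpl. nia. }
  rewrite (psi_eq m hm2 b x N) by auto. simpl. f_equal.
  - apply Cprod_ext. intros k Hk. unfold pf. rewrite digit_low; auto.
  - unfold pf. rewrite digit_top; auto. Qed.

Definition G (r : Defs.C) (a : nat) : Defs.C := Csum (fun a' => Cpow r a') a.
Definition SG (r : Defs.C) (a : nat) : Defs.C := Csum (G r) a.
Definition Tsum m n x : Defs.C := Csum (fun k => Dir m (S k) x) n.

Ltac gen_atoms := repeat match goal with |- context [?t] =>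
   match t with
   | G _ _ => generalize t | SG _ _ => generalize t | Cpow _ _ => generalize t
   | Dir _ _ _ => generalize t | psi _ _ _ => generalize t | Tsum _ _ _ => generalize t
   | INR _ => generalize t end end; intros.

Lemma G_S r a : G r (S a) = Cadd (G r a) (Cpow r a).
Proof. reflexivity. Qed.
Lemma SG_S r a : SG r (S a) = Cadd (SG r a) (G r a).
Proof. reflexivity. Qed.
Lemma Dir_S m n x : Dir m (S n) x = Cadd (Dir m n x) (psi m n x).
Proof. reflexivity. Qed.
Lemma Tsum_S m n x : Tsum m (S n) x = Cadd (Tsum m n x) (Dir m (S n) x).
Proof. reflexivity. Qed.

Lemma Dir_split m (hm2 : forall k, (2 <= m k)%nat) N x a : (a < m N)%nat ->
  forall b, (b <= Mseq m N)%nat ->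
  Dir m (a * Mseq m N + b) x =
  Cadd (Cmul (G (rchar m N x) a) (Dir m (Mseq m N) x)) (Cmul (Cpow (rchar m N x) a) (Dir m b x)).
Proof.
  induction a as [|a IHa]; intros Ha b Hb.
  - simpl. unfold G; simpl. gen_atoms. csolve.
  - induction b as [|b IHb].
    + replace (S a * Mseq m N + 0)%nat with (a * Mseq m N + Mseq m N)%nat by ring.
      rewrite IHa by lia. rewrite G_S. simpl Cpow. change (Dir m 0 x) with Defs.C0.
      gen_atoms. csolve.
    + replace (S a * Mseq m N + S b)%nat with (S (S a * Mseq m N + b)) by ring.
      rewrite Dir_S, IHb by lia. rewrite psi_split by (auto; lia). rewrite (Dir_S m b).
      gen_atoms. csolve.
Qed.

Lemma Tsum_split m (hm2 : forall k, (2 <= m k)%nat) N x a : (a < m N)%nat ->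
  forall b, (b <= Mseq m N)%nat ->
  Tsum m (a * Mseq m N + b) x =
  Cadd (Cadd (Cmul (Cadd (Cscal (INR (Mseq m N)) (SG (rchar m N x) a))
                         (Cscal (INR b) (G (rchar m N x) a))) (Dir m (Mseq m N) x))
             (Cmul (G (rchar m N x) a) (Tsum m (Mseq m N) x)))
       (Cmul (Cpow (rchar m N x) a) (Tsum m b x)).
Proof.
  induction a as [|a IHa]; intros Ha b Hb.
  - simpl. unfold SG, G; simpl. gen_atoms. csolve.
  - induction b as [|b IHb].
    + replace (S a * Mseq m N + 0)%nat with (a * Mseq m N + Mseq m N)%nat by ring.
      rewrite IHa by lia. rewrite G_S, SG_S. simpl Cpow. change (Tsum m 0 x) with Defs.C0.
      change (INR 0) with 0. gen_atoms. csolve.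
    + replace (S a * Mseq m N + S b)%nat with (S (S a * Mseq m N + b)) by ring.
      rewrite Tsum_S, IHb by lia.
      replace (S (S a * Mseq m N + b)) with (S a * Mseq m N + S b)%nat by ring.
      rewrite Dir_split by (auto; lia). rewrite (Tsum_S m b), S_INR.
      gen_atoms. csolve.
Qed.

Lemma Cpow_cs t a : Cpow (cos t, sin t) a = (cos (INR a * t), sin (INR a * t)).
Proof. induction a. simpl. rewrite Rmult_0_l, cos_0, sin_0. reflexivity.
  simpl Cpow. rewrite IHa, S_INR. replace ((INR a + 1) * t) with (INR a * t + t) by ring.
  rewrite cos_plus, sin_plus. unfold Cmul; simpl. apply Ceq; simpl; ring. Qed.

Lemma G_geom r a : Cadd (Cmul (G r a) r) Defs.C1 = Cadd (G r a) (Cpow r a).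
Proof. induction a. simpl. unfold G; simpl. csolve.
  rewrite G_S. simpl Cpow. revert IHa. gen_atoms.
  destruct r, c, c0. unfold Cadd, Cmul, Defs.C1 in *; simpl in *.
  injection IHa as H1 H2. apply Ceq; simpl; nra. Qed.

Lemma G_vanish m (hm2 : forall k, (2 <= m k)%nat) x N : (x N < m N)%nat -> x N <> 0%nat ->
  G (rchar m N x) (m N) = Defs.C0.
Proof. intros Hx Hnz.
  set (t := 2 * PI * INR (x N) / INR (m N)).
  assert (Hm : 0 < INR (m N)) by (apply lt_0_INR; pose proof (hm2 N); lia).
  assert (Hxp : 0 < INR (x N)) by (apply lt_0_INR; lia).
  assert (Hxm : INR (x N) < INR (m N)) by (apply lt_INR; lia).
  assert (Ht0 : 0 < t). { unfold t. apply Rdiv_lt_0_compat; auto. pose proof PI_RGT_0. nra. }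
  assert (Ht1 : t < 2 * PI). { unfold t. apply Rmult_lt_reg_r with (INR (m N)); auto.
    unfold Rdiv. rewrite Rmult_assoc, Rinv_l by lra. pose proof PI_RGT_0. nra. }
  assert (Hr : rchar m N x = (cos t, sin t)) by reflexivity.
  assert (Hpow : Cpow (rchar m N x) (m N) = Defs.C1).
  { rewrite Hr, Cpow_cs. replace (INR (m N) * t) with (0 + 2 * INR (x N) * PI).
    rewrite cos_period, sin_period, cos_0, sin_0. reflexivity.
    unfold t. field. lra. }
  pose proof (G_geom (rchar m N x) (m N)) as Hg. rewrite Hpow, Hr in Hg.
  assert (Hne : (cos t - 1) * (cos t - 1) + sin t * sin t > 0).
  { destruct (Rtotal_order t PI) as [H|[H|H]].
    - pose proof (sin_gt_0 t Ht0 H) as Hs. pose proof (Rmult_lt_0_compat _ _ Hs Hs). pose proof (Rle_0_sqr (cos t - 1)). unfold Rsqr in *. lra.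
    - rewrite H, cos_PI. pose proof (Rle_0_sqr (sin PI)). unfold Rsqr in *. lra.
    - pose proof (sin_lt_0 t H Ht1) as Hs. assert (0 < sin t * sin t) by nra. pose proof (Rle_0_sqr (cos t - 1)). unfold Rsqr in *. lra. }
  rewrite Hr. revert Hg Hne. generalize (G (cos t, sin t) (m N)). generalize (cos t) (sin t).
  intros c s [g1 g2] Hg Hne. unfold Cadd, Cmul, Defs.C1, Defs.C0 in *; simpl in *.
  injection Hg as H1 H2.
  assert (A1 : g1*(c-1) - g2*s = 0) by lra.
  assert (A2 : g1*s + g2*(c-1) = 0) by lra.
  assert (E1 : g1 * ((c-1)*(c-1) + s*s) = 0).
  { replace (g1 * ((c-1)*(c-1) + s*s)) with ((c-1)*(g1*(c-1) - g2*s) + s*(g1*s + g2*(c-1))) by ring.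
    rewrite A1, A2; ring. }
  assert (E2 : g2 * ((c-1)*(c-1) + s*s) = 0).
  { replace (g2 * ((c-1)*(c-1) + s*s)) with ((c-1)*(g1*s + g2*(c-1)) - s*(g1*(c-1) - g2*s)) by ring.
    rewrite A1, A2; ring. }
  apply Rmult_integral in E1. apply Rmult_integral in E2.
  destruct E1; [|lra]. destruct E2; [|lra]. subst; reflexivity. Qed.

Lemma Dir_M m (hm2 : forall k, (2 <= m k)%nat) x (hx : inGm m x) N :
  Dir m (Mseq m N) x = Defs.C0 \/ (forall k, (k < N)%nat -> x k = 0%nat).
Proof. induction N.
  - right. intros; lia.
  - assert (HD : Dir m (Mseq m (S N)) x = Cmul (G (rchar m N x) (m N)) (Dir m (Mseq m N) x)).
    { pose proof (hm2 N).
      replace (Mseq m (S N)) with ((m N - 1) * Mseq m N + Mseq m N)%nat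
        by (simpl; destruct (m N); [lia|]; simpl; lia).
      rewrite Dir_split by (auto; lia).
      replace (m N) with (S (m N - 1)) at 3 by lia. rewrite G_S. gen_atoms. csolve. }
    destruct (Nat.eq_dec (x N) 0) as [H0|H0].
    + destruct IHN as [IH|IH].
      * left. rewrite HD, IH. csolve.
      * right. intros k Hk. destruct (Nat.eq_dec k N). subst; auto. apply IH; lia.
    + left. rewrite HD, G_vanish; auto. csolve.
Qed.

Lemma Cpow_C1 d : Cpow Defs.C1 d = Defs.C1.
Proof. induction d; simpl; auto. rewrite IHd. csolve. Qed.

Lemma psi_one m (hm2 : forall k, (2 <= m k)%nat) x N : (forall k, (k < N)%nat -> x k = 0%nat) ->
  forall j, (j < Mseq m N)%nat -> psi m j x = Defs.C1.
Proof. intros Hz j Hj. rewrite (psi_eq m hm2 j x N Hj).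
  transitivity (Cprod (fun _ => Defs.C1) N).
  - apply Cprod_ext. intros k Hk. unfold pf, rchar. rewrite (Hz k Hk).
    replace (2 * PI * INR 0 / INR (m k)) with 0 by (simpl; unfold Rdiv; ring).
    rewrite cos_0, sin_0. apply Cpow_C1.
  - clear. induction N; simpl; auto. rewrite IHN. csolve. Qed.

Lemma DM_bound m (hm2 : forall k, (2 <= m k)%nat) x (hx : inGm m x) N :
  INR (Mseq m N) * Cnorm (Dir m (Mseq m N) x) <= 2 * Cnorm (Tsum m (Mseq m N) x).
Proof. destruct (Dir_M m hm2 x hx N) as [H|H].
  - rewrite H, Cnorm_C0. pose proof (Cnorm_ge0 (Tsum m (Mseq m N) x)). lra.
  - assert (HD : forall j, (j <= Mseq m N)%nat -> Dir m j x = (INR j, 0)).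
    { induction j; intros Hj. reflexivity. rewrite Dir_S, IHj by lia.
      rewrite (psi_one m hm2 x N H j) by lia. rewrite S_INR. unfold Cadd, Defs.C1; simpl.
      apply Ceq; simpl; ring. }
    assert (HT : forall j, (j <= Mseq m N)%nat -> Tsum m j x = (INR j * (INR j + 1) / 2, 0)).
    { induction j; intros Hj. unfold Tsum; simpl. apply Ceq; simpl; field.
      rewrite Tsum_S, IHj, HD by lia. rewrite S_INR. unfold Cadd; simpl.
      apply Ceq; simpl; field. }
    rewrite HD, HT by lia. rewrite !Cnorm_real. pose proof (pos_INR (Mseq m N)).
    rewrite !Rabs_right; try nra. Qed.

Lemma G_norm r a : Cnorm r = 1 -> Cnorm (G r a) <= INR a.
Proof. intro Hr. induction a. unfold G; simpl. rewrite Cnorm_C0; lra.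
  rewrite G_S, S_INR. eapply Rle_trans. apply Cnorm_add. rewrite Cnorm_pow; auto. lra. Qed.

Lemma SG_norm r a : Cnorm r = 1 -> Cnorm (SG r a) <= INR a * INR a.
Proof. intro Hr. induction a. unfold SG; simpl. rewrite Cnorm_C0; lra.
  rewrite SG_S, S_INR. eapply Rle_trans. apply Cnorm_add. pose proof (G_norm r a Hr).
  pose proof (pos_INR a). nra. Qed.

Lemma step_bound m (hm2 : forall k, (2 <= m k)%nat) (B : nat) (hB : forall k, (m k <= B)%nat)
  x (hx : inGm m x) N n : (n < Mseq m (S N))%nat ->
  Cnorm (Tsum m n x) <= (2 * INR B * INR B + 3 * INR B) * Cnorm (Tsum m (Mseq m N) x)
     + Cnorm (Tsum m (n mod Mseq m N) x).
Proof. intro Hn.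
  pose proof (Mseq_pos m hm2 N) as HM.
  set (M := Mseq m N) in *.
  assert (Hdec : n = (n / M * M + n mod M)%nat).
  { rewrite (Nat.div_mod_eq n M) at 1. ring. }
  assert (Ha : (n / M < m N)%nat).
  { apply Nat.Div0.div_lt_upper_bound. simpl in Hn. fold M in Hn. lia. }
  assert (Hb : (n mod M < M)%nat) by (apply Nat.mod_upper_bound; lia).
  set (a := (n / M)%nat) in *. set (b := (n mod M)%nat) in *.
  rewrite Hdec. unfold M. rewrite Tsum_split by (auto; lia). fold M.
  set (r := rchar m N x). assert (Hr : Cnorm r = 1) by apply Cnorm_rchar.
  pose proof (G_norm r a Hr). pose proof (SG_norm r a Hr).
  pose proof (DM_bound m hm2 x hx N) as HDM. fold M in HDM.
  assert (HaB : INR a <= INR B) by (apply le_INR; specialize (hB N); lia).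
  assert (HbM : INR b <= INR M) by (apply le_INR; lia).
  pose proof (pos_INR a). pose proof (pos_INR b).
  pose proof (Cnorm_ge0 (Dir m M x)). pose proof (Cnorm_ge0 (Tsum m M x)).
  pose proof (Cnorm_ge0 (Tsum m b x)).
  eapply Rle_trans. apply Cnorm_add. eapply Rle_trans. apply Rplus_le_compat_r. apply Cnorm_add.
  rewrite !Cnorm_mul, Cnorm_pow by auto.
  assert (HH1 : Cnorm (Cadd (Cscal (INR M) (SG r a)) (Cscal (INR b) (G r a))) <= INR M * (INR B * INR B) + INR M * INR B).
  { eapply Rle_trans. apply Cnorm_add. rewrite !Cnorm_scal, !Rabs_right by (apply Rle_ge, pos_INR).
    pose proof (pos_INR M). apply Rplus_le_compat.
    - apply Rmult_le_compat_l; auto. nra.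
    - apply Rmult_le_compat; auto. apply Cnorm_ge0. lra. }
  assert (HH2 : Cnorm (Cadd (Cscal (INR M) (SG r a)) (Cscal (INR b) (G r a))) * Cnorm (Dir m M x)
     <= (INR B * INR B + INR B) * (2 * Cnorm (Tsum m M x))).
  { eapply Rle_trans. apply Rmult_le_compat_r. auto. apply HH1.
    pose proof (pos_INR B).
    replace ((INR M * (INR B * INR B) + INR M * INR B) * Cnorm (Dir m M x)) with
      ((INR B * INR B + INR B) * (INR M * Cnorm (Dir m M x))) by ring.
    apply Rmult_le_compat_l; nra. }
  assert (HH3 : Cnorm (G r a) * Cnorm (Tsum m M x) <= INR B * Cnorm (Tsum m M x)).
  { apply Rmult_le_compat_r; lra. }
  lra. Qed.

Lemma fejer_bound m (hm2 : forall k, (2 <= m k)%nat) (B : nat) (hB : forall k, (m k <= B)%nat)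
  x (hx : inGm m x) N : forall n, (n < Mseq m (S N))%nat ->
  Cnorm (Tsum m n x) <= (2 * INR B * INR B + 3 * INR B) *
     sum_f_R0 (fun l => Cnorm (Tsum m (Mseq m l) x)) N.
Proof. induction N; intros n Hn; pose proof (step_bound m hm2 B hB x hx _ n Hn) as H.
  - simpl in H |- *. replace (n mod 1)%nat with 0%nat in H by (symmetry; apply Nat.mod_1_r). unfold Tsum at 3 in H; simpl in H.
    rewrite Cnorm_C0 in H. lra.
  - replace (sum_f_R0 _ (S N)) with (sum_f_R0 (fun l => Cnorm (Tsum m (Mseq m l) x)) N + Cnorm (Tsum m (Mseq m (S N)) x)) by reflexivity.
    assert (Hb : (n mod Mseq m (S N) < Mseq m (S N))%nat) by (apply Nat.mod_upper_bound; pose proof (Mseq_pos m hm2 (S N)); lia).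
    pose proof (IHN _ Hb). rewrite Rmult_plus_distr_l. lra. Qed.

Lemma abel (w : nat -> R) (T d : nat -> Defs.C) (A : R) n :
  (forall k, 0 <= w k) -> (forall k, w (S k) <= w k) -> T 0%nat = Defs.C0 ->
  (forall k, T (S k) = Cadd (T k) (d k)) -> 0 <= A ->
  (forall j, (j <= n)%nat -> Cnorm (T j) <= A) ->
  Cnorm (Csum (fun k => Cscal (w k) (d k)) n) <= w 0%nat * A.
Proof. intros Hw Hmono HT0 HTS HA HTb.
  assert (Cl : forall i, (S i <= n)%nat ->
    Cnorm (Cadd (Csum (fun k => Cscal (w k) (d k)) (S i)) (Cscal (- w i) (T (S i)))) <= (w 0%nat - w i) * A).
  { induction i; intros Hi.
    - simpl. rewrite HTS, HT0. replace (Cadd (Cadd Defs.C0 (Cscal (w 0%nat) (d 0%nat))) (Cscal (- w 0%nat) (Cadd Defs.C0 (d 0%nat)))) with Defs.C0 by (gen_atoms; csolve).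
      rewrite Cnorm_C0. lra.
    - replace (Cadd (Csum (fun k => Cscal (w k) (d k)) (S (S i))) (Cscal (- w (S i)) (T (S (S i)))))
        with (Cadd (Cadd (Csum (fun k => Cscal (w k) (d k)) (S i)) (Cscal (- w i) (T (S i))))
                   (Cscal (w i - w (S i)) (T (S i)))).
      2:{ change (Csum (fun k => Cscal (w k) (d k)) (S (S i))) with
            (Cadd (Csum (fun k => Cscal (w k) (d k)) (S i)) (Cscal (w (S i)) (d (S i)))).
          rewrite (HTS (S i)). generalize (Csum (fun k => Cscal (w k) (d k)) (S i)). intros. gen_atoms.
          generalize (w i) (w (S i)) (T (S i)) (d (S i)). intros. csolve. }
      eapply Rle_trans. apply Cnorm_add. rewrite Cnorm_scal.
      pose proof (IHi ltac:(lia)). pose proof (HTb (S i) ltac:(lia)). pose proof (Hmono i).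
      rewrite Rabs_right by lra. nra. }
  destruct n. simpl. rewrite Cnorm_C0. pose proof (Hw 0%nat). nra.
  pose proof (Cl n ltac:(lia)).
  replace (Csum (fun k => Cscal (w k) (d k)) (S n)) with
     (Cadd (Cadd (Csum (fun k => Cscal (w k) (d k)) (S n)) (Cscal (- w n) (T (S n)))) (Cscal (w n) (T (S n))))
     by (generalize (Csum (fun k => Cscal (w k) (d k)) (S n)) (w n) (T (S n)); intros; csolve).
  eapply Rle_trans. apply Cnorm_add. rewrite Cnorm_scal. pose proof (HTb (S n) ltac:(lia)).
  pose proof (Hw n). rewrite Rabs_right by lra. nra. Qed.

Lemma Rsum_nonneg (q : nat -> R) n : (forall k, 0 <= q k) -> 0 <= Rsum q n.
Proof. intro H; induction n; simpl. lra. pose proof (H n); lra. Qed.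

Lemma q_mono (q : nat -> R) (hq : forall k, q k <= q (S k)) i j : (i <= j)%nat -> q i <= q j.
Proof. induction 1. lra. pose proof (hq m); lra. Qed.

Theorem mainTheorem4
  (m : nat -> nat)
  (hm2 : forall k, (2 <= m k)%nat)
  (hmb : exists B, forall k, (m k <= B)%nat)
  (q : nat -> R)
  (hqnn : forall k, 0 <= q k)
  (hqmono : forall k, q k <= q (S k))
  (hq0 : 0 < q 0%nat)
  (hO : exists C0 : R, exists N0 : nat, forall n : nat, (N0 <= n)%nat ->
          Rabs (q (n - 1)%nat / Qs q n) <= C0 / INR n) :
  exists c : R, 0 < c /\
    forall (n : nat) (x : nat -> nat) (N : nat),
      (1 <= n)%nat -> inGm m x ->
      (Mseq m N <= n < Mseq m (S N))%nat ->
      Cnorm (Norlund m q n x)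
        <= c / INR n * sum_f_R0 (fun j => INR (Mseq m j) * Cnorm (Fejer m (Mseq m j) x)) N.
Proof.
  destruct hmb as [B hB]. destruct hO as [C0' [N0 HO]].
  assert (HB2 : 2 <= INR B).
  { replace 2 with (INR 2) by (simpl; ring). apply le_INR. specialize (hm2 0%nat); specialize (hB 0%nat); lia. }
  set (K := 2 * INR B * INR B + 3 * INR B).
  assert (HK : 0 < K) by (unfold K; nra).
  set (c1 := Rmax 1 (Rmax C0' (INR N0))).
  assert (Hc1 : 1 <= c1) by apply Rmax_l.
  exists (K * c1). split. nra.
  intros n x N Hn1 hx [HN1 HN2].
  set (SS := sum_f_R0 (fun l => Cnorm (Tsum m (Mseq m l) x)) N).
  assert (HS : 0 <= SS). { apply cond_pos_sum. intros; apply Cnorm_ge0. }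
  replace (sum_f_R0 (fun j => INR (Mseq m j) * Cnorm (Fejer m (Mseq m j) x)) N) with SS.
  2:{ apply sum_eq. intros l _. change (Fejer m (Mseq m l) x) with (Cscal (/ INR (Mseq m l)) (Tsum m (Mseq m l) x)).
      rewrite Cnorm_scal. pose proof (Mseq_pos m hm2 l).
      assert (0 < INR (Mseq m l)) by (apply lt_0_INR; lia).
      rewrite Rabs_right by (apply Rle_ge; left; apply Rinv_0_lt_compat; auto). field. lra. }
  assert (Hab : Cnorm (Csum (fun k => Cscal (q (n - S k)%nat) (Dir m (S k) x)) n) <= q (n - 1)%nat * (K * SS)).
  { replace (q (n - 1)%nat) with ((fun k => q (n - S k)%nat) 0%nat) by (f_equal; lia).
    apply (abel (fun k => q (n - S k)%nat) (fun j => Tsum m j x) (fun k => Dir m (S k) x)).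
    - intros; apply hqnn.
    - intros k. apply q_mono; auto. lia.
    - reflexivity.
    - intros; reflexivity.
    - nra.
    - intros j Hj. apply fejer_bound; auto. lia. }
  assert (HQ : 0 < Qs q n /\ q (n - 1)%nat <= Qs q n).
  { destruct n. lia. unfold Qs; simpl. replace (n - 0)%nat with n by lia.
    pose proof (Rsum_nonneg q n hqnn). pose proof (q_mono q hqmono 0 n ltac:(lia)). lra. }
  destruct HQ as [HQ1 HQ2].
  assert (Hnpos : 0 < INR n) by (apply lt_0_INR; lia).
  assert (Hratio : q (n - 1)%nat / Qs q n <= c1 / INR n).
  { destruct (le_lt_dec N0 n) as [Hle|Hlt].
    - pose proof (HO n Hle). pose proof (Rle_abs (q (n - 1)%nat / Qs q n)).
      assert (C0' <= c1) by (unfold c1; eapply Rle_trans; [apply Rmax_l|apply Rmax_r]).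
      assert (C0' / INR n <= c1 / INR n) by (apply Rmult_le_compat_r; [left; apply Rinv_0_lt_compat; auto|auto]).
      lra.
    - assert (INR N0 <= c1) by (unfold c1; eapply Rle_trans; [apply Rmax_r|apply Rmax_r]).
      assert (INR n <= INR N0) by (apply le_INR; lia).
      apply Rle_trans with 1.
      + apply Rmult_le_reg_r with (Qs q n); auto. unfold Rdiv. rewrite Rmult_assoc, Rinv_l; lra.
      + apply Rmult_le_reg_r with (INR n); auto. unfold Rdiv. rewrite Rmult_assoc, Rinv_l; lra. }
  unfold Norlund. rewrite Cnorm_scal. rewrite Rabs_right by (apply Rle_ge; left; apply Rinv_0_lt_compat; auto).
  apply Rle_trans with (/ Qs q n * (q (n - 1)%nat * (K * SS))).
  { apply Rmult_le_compat_l; auto. left; apply Rinv_0_lt_compat; auto. }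
  replace (/ Qs q n * (q (n - 1)%nat * (K * SS))) with ((q (n - 1)%nat / Qs q n) * (K * SS)) by (unfold Rdiv; ring).
  replace (K * c1 / INR n * SS) with ((c1 / INR n) * (K * SS)) by (unfold Rdiv; ring).
  apply Rmult_le_compat_r; auto. nra.
Qed.
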